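(* The relation $\{(c(\alpha),c(\beta),c(\gamma)) \text{ padded with } 0 : \alpha,\beta,\gamma<\omega^\omega,\ \alpha+\beta=\gamma\}$ — more precisely, the set of triples of equal-length words over $\omega$ forming the components of $c(\alpha,\beta,\gamma)$ for ordinals $\alpha,\beta,\gamma<\omega^\omega$ with $\alpha+\beta=\gamma$ (ordinal addition) — is $(\omega;+)$-recognizable.
   Context: Ordinal encoding: every ordinal $0<\alpha<\omega^\omega$ can be written uniquely as $\alpha=\sum_{i=m}^{0}\omega^i a_i=\omega^m a_m+\cdots+\omega^0a_0$ with $a_i<\omega$ and $a_m\ne0$; put $c(\alpha)=a_0a_1\cdots a_m\in\omega^*$ (a word over the infinite alphabet $\omega$), and $c(0)=\varepsilon$. For ordinals $\alpha_1,\dots,\alpha_n<\omega^\omega$, $c(\alpha_1,\dots,\alpha_n)$ is the $n$-tuple of words obtained by right-padding each $c(\alpha_j)$ with the symbol $0$ to the common length $\max_j|c(\alpha_j)|$ (equivalently a single word over $\omega^n$). Recognizability: let $\mathfrak M=(\omega;+)$ with $+$ the ternary graph of addition, $\mathfrak L=\{+\}$. Let $\#\notin\omega$ and $\mathfrak M_\#$ the $\{+,P_\#\}$-structure with domain $\omega\cup\{\#\}$, $+$ as in $\mathfrak M$, $P_\#(x)$ iff $x=\#$. For $w=(w_1,\dots,w_n)\in(\omega^* )^n$, $\langle w\rangle$ is the word over $(\omega\cup\{\#\})^n$ of length $\max_i|w_i|$ obtained by right-padding each $w_i$ with $\#$ and reading in parallel. An $\mathfrak M$-automaton with $n$ tapes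 is $(Q,n,E,I,T)$ with $Q$ finite, $I,T\subseteq Q$, and a finite set $E\subseteq Q\times\mathcal F_n\times Q$, $\mathcal F_n$ the first-order $\{+,P_\#\}$-formulas with $n$ free variables; $w$ is accepted if, writing $\langle w\rangle=u_0\cdots u_{m-1}$, there are states $q_0\in I,\dots,q_m\in T$ such that for each $i<m$ some $(q_i,\varphi,q_{i+1})\in E$ satisfies $\mathfrak M_\#\models\varphi(u_i)$. A relation $X\subseteq(\omega^* )^n$ is $(\omega;+)$-recognizable if it is the set of tuples accepted by some such automaton. *)

(* Defs.v *)
From mathcomp Require Import all_boot.
From Stdlib Require Lists.List.
Set Implicit Arguments. Unset Strict Implicit. Unset Printing Implicit Defensive.

(* An ordinal 0 < alpha < omega^omega, alpha = sum_{i=m}^{0} omega^i a_i with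
   a_m <> 0, is represented by the word c(alpha) = a_0 a_1 ... a_m : seq nat;
   0 is represented by the empty word. *)
Definition cnf (s : seq nat) : bool := last 1 s != 0.

(* If beta = 0 then alpha + beta = alpha; otherwise,
   with k the leading exponent of beta, the coefficients of alpha + beta are
   b_i for i < k, a_k + b_k at i = k, and a_i for i > k. *)
Definition oadd (a b : seq nat) : seq nat :=
  if b is [::] then a
  else let k := (size b).-1 in
       take k b ++ (nth 0 a k + nth 0 b k) :: drop k.+1 a.

Definition pad0 (m : nat) (s : seq nat) : seq nat := s ++ nseq (m - size s) 0.

(* Elements of omega ∪ {#} are represented by option nat, None = #. *)
Inductive formula : Type :=
  | FAdd of nat & nat & nat
  | FP of nat
  | FEq of nat & nat
  | FFalse
  | FNot of formula
  | FAnd of formula & formula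
  | FOr of formula & formula
  | FEx of nat & formula
  | FAll of nat & formula.

Definition upd (e : nat -> option nat) (v : nat) (x : option nat) :=
  fun w => if w == v then x else e w.

Fixpoint sat (e : nat -> option nat) (f : formula) : Prop :=
  match f with
  | FAdd x y z => exists a b c, e x = Some a /\ e y = Some b /\ e z = Some c
                               /\ a + b = c
  | FP x => e x = None
  | FEq x y => e x = e y
  | FFalse => False
  | FNot g => ~ sat e g
  | FAnd g h => sat e g /\ sat e h
  | FOr g h => sat e g \/ sat e h
  | FEx v g => exists x : option nat, sat (upd e v x) g
  | FAll v g => forall x : option nat, sat (upd e v x) g
  end.

Fixpoint fv_below (n : nat) (f : formula) : seq nat -> bool :=
  fun bound =>
  let ok v := (v < n) || (v \in bound) in
  match f with
  | FAdd x y z => [&& ok x, ok y & ok z]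
  | FP x => ok x
  | FEq x y => ok x && ok y
  | FFalse => true
  | FNot g => fv_below n g bound
  | FAnd g h | FOr g h => fv_below n g bound && fv_below n h bound
  | FEx v g | FAll v g => fv_below n g (v :: bound)
  end.

Definition formula_n (n : nat) (f : formula) : bool := fv_below n f [::].

(* the i-th letter of <w>, as a variable assignment (variable j < n gets the
   j-th component; other variables are irrelevant for formulas in F_n) *)
Definition letter (n : nat) (w : 'I_n -> seq nat) (i : nat) : nat -> option nat :=
  fun j => match @insub nat (fun k => k < n) 'I_n j with
           | Some k => let s := w k in
                       if i < size s then Some (nth 0 s i) else None
           | None => None
           end.

Definition conv_len (n : nat) (w : 'I_n -> seq nat) : nat :=
  \max_(j < n) size (w j).

Record automaton (n : nat) := Automaton {
  aQ : finType;
  aE : seq (aQ * formula * aQ);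
  aI : {set aQ};
  aT : {set aQ} }.

Definition wf_automaton (n : nat) (A : automaton n) : Prop :=
  forall q f q', Stdlib.Lists.List.In (q, f, q') (aE A) -> formula_n n f.

Definition accepts (n : nat) (A : automaton n) (w : 'I_n -> seq nat) : Prop :=
  exists r : nat -> aQ A,
    r 0 \in aI A /\ r (conv_len w) \in aT A /\
    forall i, i < conv_len w ->
      exists f, Stdlib.Lists.List.In (r i, f, r i.+1) (aE A) /\ sat (letter w i) f.

Definition recognizable (n : nat) (X : ('I_n -> seq nat) -> Prop) : Prop :=
  exists A : automaton n, wf_automaton A /\
    forall w, X w <-> accepts A w.

Definition add_rel (w : 'I_3 -> seq nat) : Prop :=
  exists a b c : seq nat,
    [/\ cnf a, cnf b, cnf c, oadd a b = c &
      let m := maxn (size a) (maxn (size b) (size c)) in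
      forall j : 'I_3, w j = pad0 m (nth [::] [:: a; b; c] j)].

(* Main.v *)
From HB Require Import structures.
Require Import Defs.
From mathcomp Require Import all_boot zify.
Set Warnings "-notation-overridden,-redundant-canonical-projection".

Inductive st := SA | SB | SF | SE.
Definition st2o (s : st) : 'I_4 := match s with SA => inord 0 | SB => inord 1 | SF => inord 2 | SE => inord 3 end.
Definition o2st (i : 'I_4) : st := match val i with 0 => SA | 1 => SB | 2 => SF | _ => SE end.
Lemma st2oK : cancel st2o o2st. Proof. by case; rewrite /o2st /= inordK. Qed.
HB.instance Definition _ := Finite.copy st (can_type st2oK).

Fixpoint strip (s : seq nat) : seq nat :=
  if s is x :: s' then (let t := strip s' in if (x == 0) && (t == [::]) then [::] else x :: t) else [::].

Lemma nth_strip s i : nth 0 (strip s) i = nth 0 s i.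
Proof.
elim: s i => [|x s IH] i //=. case: ifP => [/andP [/eqP -> /eqP E] | _].
- case: i => [|i] //=. by rewrite -IH E nth_nil.
- by case: i.
Qed.

Lemma cnf_strip s : cnf (strip s).
Proof.
elim: s => [|x s IH] //=. case: ifP => // /negbT. rewrite negb_and => H.
rewrite /cnf /=. move: IH H; rewrite /cnf. case: (strip s) => [|y t] //=; rewrite orbF.
by [].

Qed.

Lemma size_strip s : size (strip s) <= size s.
Proof. elim: s => [|x s IH] //=. case: ifP => //= _. Qed.

Lemma nth_pad0 m s i : nth 0 (pad0 m s) i = nth 0 s i.
Proof.
rewrite /pad0 nth_cat; case: ltnP => h //. by rewrite nth_nseq if_same nth_default.
Qed.

Lemma size_pad0 m s : size s <= m -> size (pad0 m s) = m.
Proof. move=> h. rewrite /pad0 size_cat size_nseq. lia. Qed.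

Lemma pad0_strip s : pad0 (size s) (strip s) = s.
Proof.
apply: (@eq_from_nth _ 0); first by rewrite size_pad0 // size_strip.
move=> i _. by rewrite nth_pad0 nth_strip.
Qed.

Lemma cnf_eq s t : cnf t -> size s <= size t -> (forall i, nth 0 s i = nth 0 t i) -> s = t.
Proof.
move=> ct le E. apply: (@eq_from_nth _ 0) => [|i _]; last exact: E.
apply/eqP; rewrite eqn_leq le /= leqNgt; apply/negP => lt.
move: ct E lt le; rewrite /cnf. case/lastP: t => [//|t y].
rewrite last_rcons size_rcons => /eqP yn E lt le. apply: yn.
have := E (size t). rewrite nth_rcons ltnn eqxx nth_default; [by move=> -> | by rewrite -ltnS].
Qed.

Lemma size_oadd a b : size (oadd a b) = maxn (size a) (size b).
Proof.
case: b => [|y b] /=; first by rewrite maxn0.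
rewrite size_cat size_take /= size_drop ltnSn. lia.
Qed.

Lemma nth_oadd a b i : b != [::] -> nth 0 (oadd a b) i =
  if i < (size b).-1 then nth 0 b i
  else if i == (size b).-1 then nth 0 a (size b).-1 + nth 0 b (size b).-1
  else nth 0 a i.
Proof.
case: b => [//|y b] _ /=. rewrite nth_cat size_take /= ltnSn.
case: ltnP => h1; first by rewrite nth_take.
case: eqP => [->|h2]; first by rewrite subnn.
have hi : size b < i by rewrite ltn_neqAle h1 andbT; apply/eqP => e; apply: h2; rewrite e.
by rewrite -[i - size b](subnSK hi) /= nth_drop subnKC.
Qed.

Lemma letterE n (w : 'I_n -> seq nat) i (j : 'I_n) :
  letter w i j = if i < size (w j) then Some (nth 0 (w j) i) else None.
Proof.
rewrite /letter. case: insubP => [k _ kE | ]; last by rewrite ltn_ord.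
by have -> : k = j by apply: val_inj.
Qed.

Definition fAA := FAnd (FEq 2 1) (FEx 3 (FAdd 0 1 3)).
Definition fAB := FAnd (FAdd 0 1 2) (FNot (FAdd 1 1 1)).
Definition fBB := FAnd (FAdd 0 1 2) (FAdd 1 1 1).
Definition fBF := FAnd fBB (FNot (FAdd 2 2 2)).
Definition edges : seq (st * formula * st) :=
  [:: (SA, fAA, SA); (SA, fAB, SB); (SA, fAB, SF); (SB, fBB, SB); (SB, fBF, SF)].
Definition Aut : automaton 3 := @Automaton 3 st edges [set SA; SB; SE] [set SF; SE].

Definition tr (q q' : st) (u v t : nat) : Prop :=
 match q, q' with
 | SA, SA => t = v
 | SA, SB | SA, SF => v <> 0 /\ t = u + v
 | SB, SB => v = 0 /\ t = u
 | SB, SF => v = 0 /\ t = u /\ t <> 0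
 | _, _ => False end.

Lemma wf_Aut : wf_automaton Aut.
Proof.
move=> q f q' /=.
by case=> [[_ <- _]|[[_ <- _]|[[_ <- _]|[[_ <- _]|[[_ <- _]|[]]]]]].
Qed.

Lemma step_sound e q f q' : Stdlib.Lists.List.In (q, f, q') edges -> sat e f ->
  exists u v t, [/\ e 0 = Some u, e 1 = Some v, e 2 = Some t & tr q q' u v t].
Proof.
rewrite /=.
case=> [[<- <- <-]|[[<- <- <-]|[[<- <- <-]|[[<- <- <-]|[[<- <- <-]|[]]]]]] /=; rewrite /upd /=.
- case=> E [x [a [b [c [Ha [Hb [_ _]]]]]]]. exists a, b, b. by rewrite E.
- case=> [[a [b [c [Ha [Hb [Hc abc]]]]]] N]. exists a, b, c; split => //; split => //.
  move=> b0; apply: N; exists b, b, b; do 3 (split => //); lia.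
- case=> [[a [b [c [Ha [Hb [Hc abc]]]]]] N]. exists a, b, c; split => //; split => //.
  move=> b0; apply: N; exists b, b, b; do 3 (split => //); lia.
- case=> [[a [b [c [Ha [Hb [Hc abc]]]]]] [a' [b' [c' [Ha' [Hb' [Hc' abc']]]]]]].
  exists a, b, c; split => //. rewrite Hb in Ha' Hb' Hc'; case: Ha' => ?; case: Hb' => ?; case: Hc' => ?; subst.
  split; lia.
- case=> [[[a [b [c [Ha [Hb [Hc abc]]]]]] [a' [b' [c' [Ha' [Hb' [Hc' abc']]]]]]] N].
  exists a, b, c; split => //. rewrite Hb in Ha' Hb' Hc'; case: Ha' => ?; case: Hb' => ?; case: Hc' => ?; subst.
  split; [lia | split; [lia|]] => c0; apply: N; eexists _, _, _; split; [eassumption| split; [eassumption | split; [eassumption|]]]; lia.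
Qed.

Lemma step_complete e q q' u v t : e 0 = Some u -> e 1 = Some v -> e 2 = Some t ->
  tr q q' u v t -> exists f, Stdlib.Lists.List.In (q, f, q') edges /\ sat e f.
Proof.
move=> e0 e1 e2.
case: q; case: q' => //=.
- move=> tv; exists fAA; split; first by left.
  rewrite /= /upd /=; split; first by rewrite e2 e1 tv.
  exists (Some (u + v)), u, v, (u + v); by rewrite e0 e1.
- move=> [vn tE]; exists fAB; split; first by right; left.
  split; first by exists u, v, t.
  case=> a [b [c [Ha [Hb [Hc abc]]]]]. move: Ha Hb Hc; rewrite e1 => -[?] [?] [?]; subst; lia.
- move=> [vn tE]; exists fAB; split; first by right; right; left.
  split; first by exists u, v, t.
  case=> a [b [c [Ha [Hb [Hc abc]]]]]. move: Ha Hb Hc; rewrite e1 => -[?] [?] [?]; subst; lia.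
- move=> [v0 tE]; exists fBB; split; first by right; right; right; left.
  rewrite /= e0 e1 e2; split; [exists u, v, t | exists v, v, v]; do 3 (split => //); lia.
- move=> [v0 [tE tn]]; exists fBF; split; first by right; right; right; right; left.
  split; first by rewrite /= e0 e1 e2; split; [exists u, v, t | exists v, v, v]; do 3 (split => //); lia.
  case=> a [b [c [Ha [Hb [Hc abc]]]]]. move: Ha Hb Hc; rewrite e2 => -[?] [?] [?]; subst; lia.
Qed.

Lemma last_nth (s : seq nat) : 0 < size s -> last 1 s = nth 0 s (size s).-1.
Proof. case/lastP: s => [//|s y] _. by rewrite last_rcons size_rcons /= nth_rcons ltnn eqxx. Qed.

Lemma run_ok L (r : nat -> st) (x y z : seq nat) :
  size x = L -> size y = L -> size z = L -> (r L = SF \/ r L = SE) ->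
  (forall i, i < L -> tr (r i) (r i.+1) (nth 0 x i) (nth 0 y i) (nth 0 z i)) ->
  cnf z /\ oadd (strip x) (strip y) = z.
Proof.
move=> sx sy sz hL hst.
have AB : forall i, i < L -> r i = SA \/ r i = SB.
  by move=> i /hst; case: (r i); case: (r i.+1) => //=; auto.
have Bp : forall i j, r i = SB -> i <= j -> j < L -> r j = SB.
  move=> i j ri; elim: j => [|j IH]; first by rewrite leqn0 => /eqP <-.
  rewrite leq_eqVlt => /orP [/eqP <- //| ij] jL. rewrite ltnS in ij.
  have rj := IH ij (ltnW jL). move: (hst j (ltnW jL)); rewrite rj.
  case E: (r j.+1) => //= _. by case: (AB _ jL); rewrite E.
have Bv : forall i, r i = SB -> i < L -> nth 0 y i = 0 /\ nth 0 z i = nth 0 x i.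
  move=> i ri iL; move: (hst i iL); rewrite ri; case: (r i.+1) => //=; intuition.
have Aev : forall d i, L - i = d -> r i = SA -> i <= L ->
    exists j, i <= j /\ j < L /\ nth 0 y j <> 0.
  elim=> [|d IH] i dE ri iL.
  - have iE : i = L by lia. subst. by case: hL; rewrite ri.
  - have iL' : i < L by lia. move: (hst i iL'); rewrite ri. case E: (r i.+1) => /=.
    + move=> _. have [j [h1 [h2 h3]]] := IH i.+1 ltac:(lia) E iL'. exists j; split => //; lia.
    + by case=> vn _; exists i; split => //.
    + by case=> vn _; exists i; split => //.
    + done.
set a := strip x; set b := strip y.
have na : forall i, nth 0 a i = nth 0 x i by move=> i; apply: nth_strip.
have nb : forall i, nth 0 b i = nth 0 y i by move=> i; apply: nth_strip.
have sa : size a <= L by rewrite -sx size_strip.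
have sb : size b <= L by rewrite -sy size_strip.
split.
  case: (posnP L) => [L0 | Lpos].
    have -> : z = [::] by apply/nilP; rewrite /nilp sz L0.
    done.
  have hl := hst L.-1 ltac:(lia). rewrite prednK // in hl.
  have zn : nth 0 z L.-1 <> 0.
    case: hL => E; rewrite E in hl; case: (AB L.-1 ltac:(lia)) => R; rewrite R /= in hl; lia.
  by rewrite /cnf last_nth sz //; apply/eqP.
apply: cnf_eq.
- case: (posnP L) => [L0 | Lpos].
    have -> : z = [::] by apply/nilP; rewrite /nilp sz L0.
    done.
  have hl := hst L.-1 ltac:(lia). rewrite prednK // in hl.
  have zn : nth 0 z L.-1 <> 0.
    case: hL => E; rewrite E in hl; case: (AB L.-1 ltac:(lia)) => R; rewrite R /= in hl; lia.
  by rewrite /cnf last_nth sz //; apply/eqP.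
- rewrite size_oadd sz geq_max sa sb //.
move=> i.
case: (ltnP i L) => iL; last first.
  rewrite nth_default; last by rewrite size_oadd geq_max (leq_trans sa iL) (leq_trans sb iL).
  by rewrite nth_default // sz.
case bE: (b == [::]).
  rewrite (eqP bE) /= na. case: (AB i iL) => R; last by case: (Bv i R iL).
  have [j [_ [jL yj]]] := Aev _ i erefl R (ltnW iL).
  by move: yj; rewrite -nb (eqP bE) nth_nil.
rewrite nth_oadd ?bE //.
have bpos : 0 < size b by case: (b) bE.
set k := (size b).-1.
have kL : k < L by rewrite /k; lia.
have yk : nth 0 y k <> 0.
  have := cnf_strip y. rewrite -/b /cnf last_nth // -nb. by move/eqP.
have yj : forall j, k < j -> nth 0 y j = 0.
  move=> j kj. by rewrite -nb nth_default // -(prednK bpos).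
have rAk : forall i, i <= k -> r i = SA.
  move=> j jk. case: (AB j ltac:(lia)) => // R.
  have := Bv k (Bp j k R jk kL) kL. by case.
have rk1 : r k.+1 <> SA.
  move=> R. have [j [h1 [h2 h3]]] := Aev _ k.+1 erefl R kL.
  by apply: h3; apply: yj.
case: ltnP => h1.
  have := hst i iL. rewrite (rAk i (ltnW h1)) (rAk i.+1 h1) /= => ->. by rewrite nb.
case: eqP => h2.
  rewrite h2; have := hst k kL. rewrite (rAk k (leqnn k)) na nb.
  case E: (r k.+1) => /=; [by case: rk1 | by case=> _ -> | by case=> _ -> | by []].
have ki : k < i by rewrite ltn_neqAle h1 andbT; apply/eqP => e; apply: h2; rewrite e.
have rk1B : r k.+1 = SB.
  by case: (AB k.+1 ltac:(lia)).
have := Bv i (Bp _ _ rk1B ki iL) iL. case=> _ ->. by rewrite na.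
Qed.

Definition rf (m sb : nat) (i : nat) : st :=
  if m == 0 then SE else if i == m then SF else if i < sb then SA else SB.

Lemma run_fwd a b c : cnf b -> cnf c -> oadd a b = c -> forall i, i < size c ->
  tr (rf (size c) (size b) i) (rf (size c) (size b) i.+1) (nth 0 a i) (nth 0 b i) (nth 0 c i).
Proof.
move=> cb cc E i ic. have sc := size_oadd a b; rewrite E in sc.
have cpos : 0 < size c by lia.
have cl : nth 0 c (size c).-1 <> 0 by apply/eqP; rewrite -last_nth.
rewrite /rf. have -> : (size c == 0) = false by lia.
rewrite (ltn_eqF ic).
case bE: (b == [::]).
  move/eqP: bE => bE; subst b; rewrite /= in E; subst c => /=.
  rewrite nth_nil. case: eqP => h //=. split => //; split => //. rewrite -h /= in cl. done.
have bpos : 0 < size b by case: (b) bE.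
have nE : forall j, nth 0 c j = if j < (size b).-1 then nth 0 b j
  else if j == (size b).-1 then nth 0 a (size b).-1 + nth 0 b (size b).-1
  else nth 0 a j by move=> j; rewrite -E nth_oadd ?bE.
rewrite nE.
case: (ltnP i.+1 (size b)) => h.
  have -> : (i.+1 == size c) = false by lia.
  rewrite (ltnW h) /=. have -> : i < (size b).-1 by lia. done.
case: (ltnP i (size b)) => h'.
  have ik : i = (size b).-1 by lia.
  rewrite -ik ltnn eqxx.
  have bk : nth 0 b i <> 0 by apply/eqP; rewrite ik -last_nth.
  by case: eqP => _ /=; split.
have -> : i < (size b).-1 = false by lia.
have -> : (i == (size b).-1) = false by lia.
rewrite (nth_default 0 h').
case: eqP => h2 /=; last by [].
split => //; split => //. move: cl; rewrite -h2 /= nE.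
have -> : i < (size b).-1 = false by lia.
by have -> : (i == (size b).-1) = false by lia.
Qed.

Arguments step_complete {e q q' u v t}.
Arguments step_sound {e q f q'}.
Arguments run_ok {L r x y z}.

Definition o0 : 'I_3 := @Ordinal 3 0 isT.
Definition o1 : 'I_3 := @Ordinal 3 1 isT.
Definition o2 : 'I_3 := @Ordinal 3 2 isT.

Lemma wE3 (w : 'I_3 -> seq nat) (j : 'I_3) : w j = nth [::] [:: w o0; w o1; w o2] j.
Proof. case: j => [[|[|[|j]]] hj] //=; congr w; exact: val_inj. Qed.

Theorem proposition5p6 : recognizable add_rel.
Proof.
exists Aut; split; first exact: wf_Aut.
move=> w; split.
- case=> a [b [c [ca cb cc E wE]]].
  have sc := size_oadd a b; rewrite E in sc.
  move: wE. set m := maxn _ _ => wE.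
  have mE : m = size c by rewrite /m sc; lia.
  have sz : forall j, size (w j) = m.
    move=> j; rewrite wE size_pad0 //. case: j => [[|[|[|j]]] hj] //=; lia.
  have cl : conv_len w = m.
    apply/eqP; rewrite eqn_leq; apply/andP; split.
      by apply/bigmax_leqP => j _; rewrite sz.
    by rewrite -(sz o0) leq_bigmax.
  exists (rf m (size b)); rewrite cl; split; last split.
  + rewrite /rf. case: eqP => m0; first by rewrite !inE eqxx ?orbT.
    have -> : (0 == m) = false by apply/eqP => e; apply: m0.
    by case: ifP; rewrite !inE eqxx ?orbT.
  + rewrite /rf eqxx. by case: ifP; rewrite !inE eqxx ?orbT.
  + move=> i im.
    have L0 : letter w i 0 = Some (nth 0 a i).
      by change (letter w i o0 = Some (nth 0 a i)); rewrite letterE sz im (wE o0) nth_pad0.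
    have L1 : letter w i 1 = Some (nth 0 b i).
      by change (letter w i o1 = Some (nth 0 b i)); rewrite letterE sz im (wE o1) nth_pad0.
    have L2 : letter w i 2 = Some (nth 0 c i).
      by change (letter w i o2 = Some (nth 0 c i)); rewrite letterE sz im (wE o2) nth_pad0.
    have T := @run_fwd a b c cb cc E i ltac:(by rewrite -mE).
    rewrite -mE in T. exact: (step_complete L0 L1 L2 T).
- case=> r [h0 [hL hst]]. move: hL hst. set L := conv_len w => hL hst.
  have hsz : forall j, size (w j) <= L by move=> j; apply: leq_bigmax.
  have hstep : forall i, i < L -> [/\ i < size (w o0), i < size (w o1), i < size (w o2) &
      tr (r i) (r i.+1) (nth 0 (w o0) i) (nth 0 (w o1) i) (nth 0 (w o2) i)].
    move=> i /hst [f [Hin Hsat]]. have [u [v [t [e0 e1 e2 htr]]]] := step_sound Hin Hsat.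
    change (letter w i o0 = Some u) in e0. change (letter w i o1 = Some v) in e1.
    change (letter w i o2 = Some t) in e2.
    rewrite letterE in e0; rewrite letterE in e1; rewrite letterE in e2.
    move: e0 e1 e2; case: ifP => // h0'; case: ifP => // h1'; case: ifP => // h2'.
    by move=> [e0] [e1] [e2]; subst.
  have sizes : forall j, size (w j) = L.
    move=> j. apply/eqP; rewrite eqn_leq hsz /=.
    case: (posnP L) => [-> // | Lpos].
    have [s0 s1 s2 _] := hstep L.-1 ltac:(lia).
    rewrite (wE3 w j). case: j => [[|[|[|j]]] hj] //=; lia.
  have hL' : r L = SF \/ r L = SE by move: hL; rewrite !inE => /orP [/eqP|/eqP]; auto.
  have [cz E] := run_ok (sizes o0) (sizes o1) (sizes o2) hL'
    (fun i iL => let: And4 _ _ _ h := hstep i iL in h).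
  exists (strip (w o0)), (strip (w o1)), (w o2); split => //; try exact: cnf_strip.
  have sa := size_strip (w o0); have sb := size_strip (w o1).
  rewrite (sizes o0) in sa; rewrite (sizes o1) in sb.
  have -> : maxn (size (strip (w o0))) (maxn (size (strip (w o1))) (size (w o2))) = L.
    rewrite (sizes o2); lia.
  move=> m j; rewrite /m (wE3 w j). case: j => [[|[|[|j]]] hj] //=.
  + by rewrite -(sizes o0) pad0_strip.
  + by rewrite -(sizes o1) pad0_strip.
  + by rewrite -(sizes o2) /pad0 subnn cats0.
Qed.
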